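(* Let $\mathbb{R}[\mathsf{x}]$ be the polynomial ring in the variables $\mathsf{x}_{ij}$, $1\le i<j\le 6$ (with $\mathsf{x}_{ji}:=\mathsf{x}_{ij}$), and let \[\mathcal{I}=\langle\mathsf{x}_{ij}^2-\mathsf{x}_{ij}:1\le i<j\le6\rangle+\langle\mathsf{x}_{ij}\mathsf{x}_{ik}\mathsf{x}_{jk}:i<j<k\in[6]\rangle+\langle(1-\mathsf{x}_{ij})(1-\mathsf{x}_{ik})(1-\mathsf{x}_{jk}):i<j<k\in[6]\rangle.\] Then \[\Bigl(2-\sum_{2\le i\le6}\mathsf{x}_{1i}\Bigr)^2+\Bigl(2-\sum_{2\le i\le6}(1-\mathsf{x}_{1i})\Bigr)^2\equiv-1\pmod{\mathcal{I}}.\] *)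

(* Defs.v *)
From HB Require Import structures.
From mathcomp Require Import all_boot all_algebra.
From mathcomp Require Import reals.
From mathcomp Require Import mpoly.
Set Implicit Arguments. Unset Strict Implicit. Unset Printing Implicit Defensive.
Import GRing.Theory.
Local Open Scope ring_scope.

Definition pairs6 : seq ('I_6 * 'I_6) :=
  [seq ab <- [seq ((a : 'I_6), (b : 'I_6)) | a <- enum 'I_6, b <- enum 'I_6] | (val ab.1 < val ab.2)%N].

Definition pidx (i j : 'I_6) : 'I_15 :=
  inord (index (if (i <= j)%N then (i, j) else (j, i)) pairs6).

Definition xv (R : realType) (i j : 'I_6) : {mpoly R[15]} := 'X_(pidx i j).

Definition triples6 : seq (('I_6 * 'I_6) * 'I_6) :=
  [seq t <- [seq (ij, (k : 'I_6)) | ij <- pairs6, k <- enum 'I_6] | (val t.1.2 < val t.2)%N].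

Definition in_ideal (R : comRingType) (n : nat) (gens : seq {mpoly R[n]})
    (p : {mpoly R[n]}) : Prop :=
  exists cs : seq {mpoly R[n]},
    p = \sum_(k < size gens) cs`_k * gens`_k.

Definition gensI (R : realType) : seq {mpoly R[15]} :=
  [seq xv R ij.1 ij.2 ^+ 2 - xv R ij.1 ij.2 | ij <- pairs6]
  ++ [seq xv R t.1.1 t.1.2 * xv R t.1.1 t.2 * xv R t.1.2 t.2 | t <- triples6]
  ++ [seq (1 - xv R t.1.1 t.1.2) * (1 - xv R t.1.1 t.2) * (1 - xv R t.1.2 t.2)
       | t <- triples6].

(* The polynomial (2 - sum_{2<=i<=6} x_{1i})^2 + (2 - sum_{2<=i<=6} (1 - x_{1i}))^2
   (vertex 1 is the ordinal 0). *)
Definition fB1 (R : realType) : {mpoly R[15]} :=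
  (2 - \sum_(i : 'I_6 | i != ord0) xv R ord0 i) ^+ 2
  + (2 - \sum_(i : 'I_6 | i != ord0) (1 - xv R ord0 i)) ^+ 2.

(* Main.v *)
Require Import Defs.
From HB Require Import structures.
From mathcomp Require Import all_boot all_algebra.
From mathcomp Require Import reals.
From mathcomp Require Import mpoly.
From mathcomp Require Import ring.
Set Implicit Arguments. Unset Strict Implicit. Unset Printing Implicit Defensive.
Import GRing.Theory.
Local Open Scope ring_scope.

Section Generic.
Variables (S : comRingType) (P : S -> Prop) (z : nat -> nat -> S).
Hypothesis Padd : forall p q, P p -> P q -> P (p + q).
Hypothesis Pmul : forall p q, P p -> P (q * p).
Hypothesis Ht : forall i j k, (i < j)%N -> (j < k)%N -> (k < 6)%N ->
  P (z i j * z i k * z j k).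
Hypothesis Hf : forall i j k, (i < j)%N -> (j < k)%N -> (k < 6)%N ->
  P ((1 - z i j) * (1 - z i k) * (1 - z j k)).

Lemma splt (x : S) m : P (m * x) -> P (m * (1 - x)) -> P m.
Proof.
move=> H1 H2; have -> : m = m * x + m * (1 - x) by ring.
exact: Padd.
Qed.

Lemma leaf (c g : S) : P g -> forall m, m = c * g -> P m.
Proof. by move=> Pg m ->; apply: Pmul. Qed.

Lemma ramsey_one : P 1.
Proof.
  apply: (@splt (z 0%N 1%N)).
  -     apply: (@splt (z 0%N 2%N)).
    -       apply: (@splt (z 1%N 2%N)).
      -         apply: (@leaf (1) _ (@Ht 0%N 1%N 2%N isT isT isT)); ring.
      -         apply: (@splt (z 0%N 3%N)).
        -           apply: (@splt (z 1%N 3%N)).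
          -             apply: (@leaf (z 0%N 2%N * (1 - z 1%N 2%N)) _ (@Ht 0%N 1%N 3%N isT isT isT)); ring.
          -             apply: (@splt (z 2%N 3%N)).
            -               apply: (@leaf (z 0%N 1%N * (1 - z 1%N 2%N) * (1 - z 1%N 3%N)) _ (@Ht 0%N 2%N 3%N isT isT isT)); ring.
            -               apply: (@leaf (z 0%N 1%N * z 0%N 2%N * z 0%N 3%N) _ (@Hf 1%N 2%N 3%N isT isT isT)); ring.
        -           apply: (@splt (z 0%N 4%N)).
          -             apply: (@splt (z 1%N 4%N)).
            -               apply: (@leaf (z 0%N 2%N * (1 - z 1%N 2%N) * (1 - z 0%N 3%N)) _ (@Ht 0%N 1%N 4%N isT isT isT)); ring.
            -               apply: (@splt (z 2%N 4%N)).
              -                 apply: (@leaf (z 0%N 1%N * (1 - z 1%N 2%N) * (1 - z 0%N 3%N) * (1 - z 1%N 4%N)) _ (@Ht 0%N 2%N 4%N isT isT isT)); ring.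
              -                 apply: (@leaf (z 0%N 1%N * z 0%N 2%N * (1 - z 0%N 3%N) * z 0%N 4%N) _ (@Hf 1%N 2%N 4%N isT isT isT)); ring.
          -             apply: (@splt (z 3%N 4%N)).
            -               apply: (@splt (z 0%N 5%N)).
              -                 apply: (@splt (z 1%N 5%N)).
                -                   apply: (@leaf (z 0%N 2%N * (1 - z 1%N 2%N) * (1 - z 0%N 3%N) * (1 - z 0%N 4%N) * z 3%N 4%N) _ (@Ht 0%N 1%N 5%N isT isT isT)); ring.
                -                   apply: (@splt (z 2%N 5%N)).
                  -                     apply: (@leaf (z 0%N 1%N * (1 - z 1%N 2%N) * (1 - z 0%N 3%N) * (1 - z 0%N 4%N) * z 3%N 4%N * (1 - z 1%N 5%N)) _ (@Ht 0%N 2%N 5%N isT isT isT)); ring.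
                  -                     apply: (@leaf (z 0%N 1%N * z 0%N 2%N * (1 - z 0%N 3%N) * (1 - z 0%N 4%N) * z 3%N 4%N * z 0%N 5%N) _ (@Hf 1%N 2%N 5%N isT isT isT)); ring.
              -                 apply: (@splt (z 3%N 5%N)).
                -                   apply: (@splt (z 4%N 5%N)).
                  -                     apply: (@leaf (z 0%N 1%N * z 0%N 2%N * (1 - z 1%N 2%N) * (1 - z 0%N 3%N) * (1 - z 0%N 4%N) * (1 - z 0%N 5%N)) _ (@Ht 3%N 4%N 5%N isT isT isT)); ring.
                  -                     apply: (@leaf (z 0%N 1%N * z 0%N 2%N * (1 - z 1%N 2%N) * (1 - z 0%N 3%N) * z 3%N 4%N * z 3%N 5%N) _ (@Hf 0%N 4%N 5%N isT isT isT)); ring.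
                -                   apply: (@leaf (z 0%N 1%N * z 0%N 2%N * (1 - z 1%N 2%N) * (1 - z 0%N 4%N) * z 3%N 4%N) _ (@Hf 0%N 3%N 5%N isT isT isT)); ring.
            -               apply: (@leaf (z 0%N 1%N * z 0%N 2%N * (1 - z 1%N 2%N)) _ (@Hf 0%N 3%N 4%N isT isT isT)); ring.
    -       apply: (@splt (z 0%N 3%N)).
      -         apply: (@splt (z 1%N 3%N)).
        -           apply: (@leaf ((1 - z 0%N 2%N)) _ (@Ht 0%N 1%N 3%N isT isT isT)); ring.
        -           apply: (@splt (z 0%N 4%N)).
          -             apply: (@splt (z 1%N 4%N)).
            -               apply: (@leaf ((1 - z 0%N 2%N) * z 0%N 3%N * (1 - z 1%N 3%N)) _ (@Ht 0%N 1%N 4%N isT isT isT)); ring.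
            -               apply: (@splt (z 3%N 4%N)).
              -                 apply: (@leaf (z 0%N 1%N * (1 - z 0%N 2%N) * (1 - z 1%N 3%N) * (1 - z 1%N 4%N)) _ (@Ht 0%N 3%N 4%N isT isT isT)); ring.
              -                 apply: (@leaf (z 0%N 1%N * (1 - z 0%N 2%N) * z 0%N 3%N * z 0%N 4%N) _ (@Hf 1%N 3%N 4%N isT isT isT)); ring.
          -             apply: (@splt (z 2%N 4%N)).
            -               apply: (@splt (z 0%N 5%N)).
              -                 apply: (@splt (z 1%N 5%N)).
                -                   apply: (@leaf ((1 - z 0%N 2%N) * z 0%N 3%N * (1 - z 1%N 3%N) * (1 - z 0%N 4%N) * z 2%N 4%N) _ (@Ht 0%N 1%N 5%N isT isT isT)); ring.
                -                   apply: (@splt (z 3%N 5%N)).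
                  -                     apply: (@leaf (z 0%N 1%N * (1 - z 0%N 2%N) * (1 - z 1%N 3%N) * (1 - z 0%N 4%N) * z 2%N 4%N * (1 - z 1%N 5%N)) _ (@Ht 0%N 3%N 5%N isT isT isT)); ring.
                  -                     apply: (@leaf (z 0%N 1%N * (1 - z 0%N 2%N) * z 0%N 3%N * (1 - z 0%N 4%N) * z 2%N 4%N * z 0%N 5%N) _ (@Hf 1%N 3%N 5%N isT isT isT)); ring.
              -                 apply: (@splt (z 2%N 5%N)).
                -                   apply: (@splt (z 4%N 5%N)).
                  -                     apply: (@leaf (z 0%N 1%N * (1 - z 0%N 2%N) * z 0%N 3%N * (1 - z 1%N 3%N) * (1 - z 0%N 4%N) * (1 - z 0%N 5%N)) _ (@Ht 2%N 4%N 5%N isT isT isT)); ring.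
                  -                     apply: (@leaf (z 0%N 1%N * (1 - z 0%N 2%N) * z 0%N 3%N * (1 - z 1%N 3%N) * z 2%N 4%N * z 2%N 5%N) _ (@Hf 0%N 4%N 5%N isT isT isT)); ring.
                -                   apply: (@leaf (z 0%N 1%N * z 0%N 3%N * (1 - z 1%N 3%N) * (1 - z 0%N 4%N) * z 2%N 4%N) _ (@Hf 0%N 2%N 5%N isT isT isT)); ring.
            -               apply: (@leaf (z 0%N 1%N * z 0%N 3%N * (1 - z 1%N 3%N)) _ (@Hf 0%N 2%N 4%N isT isT isT)); ring.
      -         apply: (@splt (z 2%N 3%N)).
        -           apply: (@splt (z 0%N 4%N)).
          -             apply: (@splt (z 1%N 4%N)).
            -               apply: (@leaf ((1 - z 0%N 2%N) * (1 - z 0%N 3%N) * z 2%N 3%N) _ (@Ht 0%N 1%N 4%N isT isT isT)); ring.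
            -               apply: (@splt (z 0%N 5%N)).
              -                 apply: (@splt (z 1%N 5%N)).
                -                   apply: (@leaf ((1 - z 0%N 2%N) * (1 - z 0%N 3%N) * z 2%N 3%N * z 0%N 4%N * (1 - z 1%N 4%N)) _ (@Ht 0%N 1%N 5%N isT isT isT)); ring.
                -                   apply: (@splt (z 4%N 5%N)).
                  -                     apply: (@leaf (z 0%N 1%N * (1 - z 0%N 2%N) * (1 - z 0%N 3%N) * z 2%N 3%N * (1 - z 1%N 4%N) * (1 - z 1%N 5%N)) _ (@Ht 0%N 4%N 5%N isT isT isT)); ring.
                  -                     apply: (@leaf (z 0%N 1%N * (1 - z 0%N 2%N) * (1 - z 0%N 3%N) * z 2%N 3%N * z 0%N 4%N * z 0%N 5%N) _ (@Hf 1%N 4%N 5%N isT isT isT)); ring.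
              -                 apply: (@splt (z 2%N 5%N)).
                -                   apply: (@splt (z 3%N 5%N)).
                  -                     apply: (@leaf (z 0%N 1%N * (1 - z 0%N 2%N) * (1 - z 0%N 3%N) * z 0%N 4%N * (1 - z 1%N 4%N) * (1 - z 0%N 5%N)) _ (@Ht 2%N 3%N 5%N isT isT isT)); ring.
                  -                     apply: (@leaf (z 0%N 1%N * (1 - z 0%N 2%N) * z 2%N 3%N * z 0%N 4%N * (1 - z 1%N 4%N) * z 2%N 5%N) _ (@Hf 0%N 3%N 5%N isT isT isT)); ring.
                -                   apply: (@leaf (z 0%N 1%N * (1 - z 0%N 3%N) * z 2%N 3%N * z 0%N 4%N * (1 - z 1%N 4%N)) _ (@Hf 0%N 2%N 5%N isT isT isT)); ring.
          -             apply: (@splt (z 2%N 4%N)).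
            -               apply: (@splt (z 3%N 4%N)).
              -                 apply: (@leaf (z 0%N 1%N * (1 - z 0%N 2%N) * (1 - z 0%N 3%N) * (1 - z 0%N 4%N)) _ (@Ht 2%N 3%N 4%N isT isT isT)); ring.
              -                 apply: (@leaf (z 0%N 1%N * (1 - z 0%N 2%N) * z 2%N 3%N * z 2%N 4%N) _ (@Hf 0%N 3%N 4%N isT isT isT)); ring.
            -               apply: (@leaf (z 0%N 1%N * (1 - z 0%N 3%N) * z 2%N 3%N) _ (@Hf 0%N 2%N 4%N isT isT isT)); ring.
        -           apply: (@leaf (z 0%N 1%N) _ (@Hf 0%N 2%N 3%N isT isT isT)); ring.
  -     apply: (@splt (z 0%N 2%N)).
    -       apply: (@splt (z 0%N 3%N)).
      -         apply: (@splt (z 2%N 3%N)).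
        -           apply: (@leaf ((1 - z 0%N 1%N)) _ (@Ht 0%N 2%N 3%N isT isT isT)); ring.
        -           apply: (@splt (z 0%N 4%N)).
          -             apply: (@splt (z 2%N 4%N)).
            -               apply: (@leaf ((1 - z 0%N 1%N) * z 0%N 3%N * (1 - z 2%N 3%N)) _ (@Ht 0%N 2%N 4%N isT isT isT)); ring.
            -               apply: (@splt (z 3%N 4%N)).
              -                 apply: (@leaf ((1 - z 0%N 1%N) * z 0%N 2%N * (1 - z 2%N 3%N) * (1 - z 2%N 4%N)) _ (@Ht 0%N 3%N 4%N isT isT isT)); ring.
              -                 apply: (@leaf ((1 - z 0%N 1%N) * z 0%N 2%N * z 0%N 3%N * z 0%N 4%N) _ (@Hf 2%N 3%N 4%N isT isT isT)); ring.
          -             apply: (@splt (z 1%N 4%N)).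
            -               apply: (@splt (z 0%N 5%N)).
              -                 apply: (@splt (z 2%N 5%N)).
                -                   apply: (@leaf ((1 - z 0%N 1%N) * z 0%N 3%N * (1 - z 2%N 3%N) * (1 - z 0%N 4%N) * z 1%N 4%N) _ (@Ht 0%N 2%N 5%N isT isT isT)); ring.
                -                   apply: (@splt (z 3%N 5%N)).
                  -                     apply: (@leaf ((1 - z 0%N 1%N) * z 0%N 2%N * (1 - z 2%N 3%N) * (1 - z 0%N 4%N) * z 1%N 4%N * (1 - z 2%N 5%N)) _ (@Ht 0%N 3%N 5%N isT isT isT)); ring.
                  -                     apply: (@leaf ((1 - z 0%N 1%N) * z 0%N 2%N * z 0%N 3%N * (1 - z 0%N 4%N) * z 1%N 4%N * z 0%N 5%N) _ (@Hf 2%N 3%N 5%N isT isT isT)); ring.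
              -                 apply: (@splt (z 1%N 5%N)).
                -                   apply: (@splt (z 4%N 5%N)).
                  -                     apply: (@leaf ((1 - z 0%N 1%N) * z 0%N 2%N * z 0%N 3%N * (1 - z 2%N 3%N) * (1 - z 0%N 4%N) * (1 - z 0%N 5%N)) _ (@Ht 1%N 4%N 5%N isT isT isT)); ring.
                  -                     apply: (@leaf ((1 - z 0%N 1%N) * z 0%N 2%N * z 0%N 3%N * (1 - z 2%N 3%N) * z 1%N 4%N * z 1%N 5%N) _ (@Hf 0%N 4%N 5%N isT isT isT)); ring.
                -                   apply: (@leaf (z 0%N 2%N * z 0%N 3%N * (1 - z 2%N 3%N) * (1 - z 0%N 4%N) * z 1%N 4%N) _ (@Hf 0%N 1%N 5%N isT isT isT)); ring.
            -               apply: (@leaf (z 0%N 2%N * z 0%N 3%N * (1 - z 2%N 3%N)) _ (@Hf 0%N 1%N 4%N isT isT isT)); ring.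
      -         apply: (@splt (z 1%N 3%N)).
        -           apply: (@splt (z 0%N 4%N)).
          -             apply: (@splt (z 2%N 4%N)).
            -               apply: (@leaf ((1 - z 0%N 1%N) * (1 - z 0%N 3%N) * z 1%N 3%N) _ (@Ht 0%N 2%N 4%N isT isT isT)); ring.
            -               apply: (@splt (z 0%N 5%N)).
              -                 apply: (@splt (z 2%N 5%N)).
                -                   apply: (@leaf ((1 - z 0%N 1%N) * (1 - z 0%N 3%N) * z 1%N 3%N * z 0%N 4%N * (1 - z 2%N 4%N)) _ (@Ht 0%N 2%N 5%N isT isT isT)); ring.
                -                   apply: (@splt (z 4%N 5%N)).
                  -                     apply: (@leaf ((1 - z 0%N 1%N) * z 0%N 2%N * (1 - z 0%N 3%N) * z 1%N 3%N * (1 - z 2%N 4%N) * (1 - z 2%N 5%N)) _ (@Ht 0%N 4%N 5%N isT isT isT)); ring.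
                  -                     apply: (@leaf ((1 - z 0%N 1%N) * z 0%N 2%N * (1 - z 0%N 3%N) * z 1%N 3%N * z 0%N 4%N * z 0%N 5%N) _ (@Hf 2%N 4%N 5%N isT isT isT)); ring.
              -                 apply: (@splt (z 1%N 5%N)).
                -                   apply: (@splt (z 3%N 5%N)).
                  -                     apply: (@leaf ((1 - z 0%N 1%N) * z 0%N 2%N * (1 - z 0%N 3%N) * z 0%N 4%N * (1 - z 2%N 4%N) * (1 - z 0%N 5%N)) _ (@Ht 1%N 3%N 5%N isT isT isT)); ring.
                  -                     apply: (@leaf ((1 - z 0%N 1%N) * z 0%N 2%N * z 1%N 3%N * z 0%N 4%N * (1 - z 2%N 4%N) * z 1%N 5%N) _ (@Hf 0%N 3%N 5%N isT isT isT)); ring.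
                -                   apply: (@leaf (z 0%N 2%N * (1 - z 0%N 3%N) * z 1%N 3%N * z 0%N 4%N * (1 - z 2%N 4%N)) _ (@Hf 0%N 1%N 5%N isT isT isT)); ring.
          -             apply: (@splt (z 1%N 4%N)).
            -               apply: (@splt (z 3%N 4%N)).
              -                 apply: (@leaf ((1 - z 0%N 1%N) * z 0%N 2%N * (1 - z 0%N 3%N) * (1 - z 0%N 4%N)) _ (@Ht 1%N 3%N 4%N isT isT isT)); ring.
              -                 apply: (@leaf ((1 - z 0%N 1%N) * z 0%N 2%N * z 1%N 3%N * z 1%N 4%N) _ (@Hf 0%N 3%N 4%N isT isT isT)); ring.
            -               apply: (@leaf (z 0%N 2%N * (1 - z 0%N 3%N) * z 1%N 3%N) _ (@Hf 0%N 1%N 4%N isT isT isT)); ring.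
        -           apply: (@leaf (z 0%N 2%N) _ (@Hf 0%N 1%N 3%N isT isT isT)); ring.
    -       apply: (@splt (z 1%N 2%N)).
      -         apply: (@splt (z 0%N 3%N)).
        -           apply: (@splt (z 0%N 4%N)).
          -             apply: (@splt (z 3%N 4%N)).
            -               apply: (@leaf ((1 - z 0%N 1%N) * (1 - z 0%N 2%N) * z 1%N 2%N) _ (@Ht 0%N 3%N 4%N isT isT isT)); ring.
            -               apply: (@splt (z 0%N 5%N)).
              -                 apply: (@splt (z 3%N 5%N)).
                -                   apply: (@leaf ((1 - z 0%N 1%N) * (1 - z 0%N 2%N) * z 1%N 2%N * z 0%N 4%N * (1 - z 3%N 4%N)) _ (@Ht 0%N 3%N 5%N isT isT isT)); ring.
                -                   apply: (@splt (z 4%N 5%N)).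
                  -                     apply: (@leaf ((1 - z 0%N 1%N) * (1 - z 0%N 2%N) * z 1%N 2%N * z 0%N 3%N * (1 - z 3%N 4%N) * (1 - z 3%N 5%N)) _ (@Ht 0%N 4%N 5%N isT isT isT)); ring.
                  -                     apply: (@leaf ((1 - z 0%N 1%N) * (1 - z 0%N 2%N) * z 1%N 2%N * z 0%N 3%N * z 0%N 4%N * z 0%N 5%N) _ (@Hf 3%N 4%N 5%N isT isT isT)); ring.
              -                 apply: (@splt (z 1%N 5%N)).
                -                   apply: (@splt (z 2%N 5%N)).
                  -                     apply: (@leaf ((1 - z 0%N 1%N) * (1 - z 0%N 2%N) * z 0%N 3%N * z 0%N 4%N * (1 - z 3%N 4%N) * (1 - z 0%N 5%N)) _ (@Ht 1%N 2%N 5%N isT isT isT)); ring.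
                  -                     apply: (@leaf ((1 - z 0%N 1%N) * z 1%N 2%N * z 0%N 3%N * z 0%N 4%N * (1 - z 3%N 4%N) * z 1%N 5%N) _ (@Hf 0%N 2%N 5%N isT isT isT)); ring.
                -                   apply: (@leaf ((1 - z 0%N 2%N) * z 1%N 2%N * z 0%N 3%N * z 0%N 4%N * (1 - z 3%N 4%N)) _ (@Hf 0%N 1%N 5%N isT isT isT)); ring.
          -             apply: (@splt (z 1%N 4%N)).
            -               apply: (@splt (z 2%N 4%N)).
              -                 apply: (@leaf ((1 - z 0%N 1%N) * (1 - z 0%N 2%N) * z 0%N 3%N * (1 - z 0%N 4%N)) _ (@Ht 1%N 2%N 4%N isT isT isT)); ring.
              -                 apply: (@leaf ((1 - z 0%N 1%N) * z 1%N 2%N * z 0%N 3%N * z 1%N 4%N) _ (@Hf 0%N 2%N 4%N isT isT isT)); ring.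
            -               apply: (@leaf ((1 - z 0%N 2%N) * z 1%N 2%N * z 0%N 3%N) _ (@Hf 0%N 1%N 4%N isT isT isT)); ring.
        -           apply: (@splt (z 1%N 3%N)).
          -             apply: (@splt (z 2%N 3%N)).
            -               apply: (@leaf ((1 - z 0%N 1%N) * (1 - z 0%N 2%N) * (1 - z 0%N 3%N)) _ (@Ht 1%N 2%N 3%N isT isT isT)); ring.
            -               apply: (@leaf ((1 - z 0%N 1%N) * z 1%N 2%N * z 1%N 3%N) _ (@Hf 0%N 2%N 3%N isT isT isT)); ring.
          -             apply: (@leaf ((1 - z 0%N 2%N) * z 1%N 2%N) _ (@Hf 0%N 1%N 3%N isT isT isT)); ring.
      -         apply: (@leaf (1) _ (@Hf 0%N 1%N 2%N isT isT isT)); ring.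
Qed.
End Generic.

Lemma pair_mem (a b : 'I_6) : (val a < val b)%N -> (a, b) \in pairs6.
Proof.
move=> hab; rewrite /pairs6 mem_filter /= hab /=.
by apply: (allpairs_f (fun a b => (a, b))); rewrite mem_enum.
Qed.

Lemma tri_mem (i j k : nat) : (i < j)%N -> (j < k)%N -> (k < 6)%N ->
  (((inord i : 'I_6), (inord j : 'I_6)), (inord k : 'I_6)) \in triples6.
Proof.
move=> hij hjk hk.
have hj : (j < 6)%N by apply: ltn_trans hk.
have hi : (i < 6)%N by apply: ltn_trans hj.
rewrite /triples6 mem_filter /= !inordK // hjk /=.
apply: (allpairs_f (fun ij (k : 'I_6) => (ij, k))); last by rewrite mem_enum.
by apply: pair_mem; rewrite /= !inordK.
Qed.

Section Ideal.
Variables (R : comRingType) (n : nat) (gens : seq {mpoly R[n]}).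

Lemma ideal_add p q : in_ideal gens p -> in_ideal gens q -> in_ideal gens (p + q).
Proof.
move=> [c1 ->] [c2 ->]; exists (mkseq (fun k => c1`_k + c2`_k) (size gens)).
rewrite -big_split /=; apply: eq_bigr => k _.
by rewrite nth_mkseq // mulrDl.
Qed.

Lemma ideal_mul p q : in_ideal gens p -> in_ideal gens (q * p).
Proof.
move=> [c ->]; exists (mkseq (fun k => q * c`_k) (size gens)).
rewrite mulr_sumr; apply: eq_bigr => k _.
by rewrite nth_mkseq // mulrA.
Qed.

Lemma ideal_mem g : g \in gens -> in_ideal gens g.
Proof.
move=> gin; exists (mkseq (fun k => (k == index g gens)%:R) (size gens)).
have hi : (index g gens < size gens)%N by rewrite index_mem.
rewrite (bigD1 (Ordinal hi)) //= big1 ?addr0.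
  by rewrite nth_mkseq // eqxx mul1r nth_index.
move=> k hk; rewrite nth_mkseq //.
have /negbTE -> : (k : nat) != index g gens.
  by apply: contra hk => /eqP e; apply/eqP/val_inj.
by rewrite mul0r.
Qed.
End Ideal.

Theorem lemmaB1 (R : realType) : in_ideal (gensI R) (fB1 R - (-1)).
Proof.
pose z := fun i j : nat => xv R (inord i) (inord j).
have H1 : in_ideal (gensI R) 1.
  apply: (@ramsey_one _ _ z).
  - exact: ideal_add.
  - move=> p q; exact: ideal_mul.
  - move=> i j k hij hjk hk; apply: ideal_mem.
    rewrite /gensI mem_cat; apply/orP; right; rewrite mem_cat; apply/orP; left.
    by apply/mapP; exists ((inord i, inord j), inord k) => //; exact: tri_mem.
  - move=> i j k hij hjk hk; apply: ideal_mem.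
    rewrite /gensI mem_cat; apply/orP; right; rewrite mem_cat; apply/orP; right.
    by apply/mapP; exists ((inord i, inord j), inord k) => //; exact: tri_mem.
have -> : fB1 R - (-1) = (fB1 R + 1) * 1 by rewrite mulr1 opprK.
exact: ideal_mul.
Qed.
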